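(* Let $g\in\Gamma$, $p\in\Pi$, and $\alpha\in g\Gamma_p$, and let $\mathcal{H}\subset X$ be the horoball based at the coset $g\Gamma_p$. Let $\tau$ be a regular geodesic in $X$ from $\mathrm{id}$ to $\alpha$. Then $\tau\cap\mathcal{H}$ contains a subsegment of length at least $|\alpha|_X-(|g|_X+12\delta)$. Moreover, if $\mathcal{H}'\ne\mathcal{H}$ is any other horoball of $X$, then every component of $\tau\cap\mathcal{H}'$ has length at most $|g|_X+12\delta$.
   Context: $\Gamma$ is a finitely generated group hyperbolic relative to a finite collection $\mathcal{P}$ of infinite subgroups, with finite symmetric generating set $\mathcal{S}$ such that $P\cap\mathcal{S}$ generates $P$ for each $P\in\mathcal{P}$. $X$ is the Groves–Manning cusped space: $\mathrm{Cay}(\Gamma,\mathcal{S})$ with a combinatorial horoball glued along each left coset $gP$; it is a locally finite graph with unit-length edges and metric $d_X$, and $\delta\ge1$ is an integer such that $X$ is $\delta$-hyperbolic. $|g|_X:=d_X(\mathrm{id},g)$. $\Pi$ is the set of points of the Bowditch boundary fixed by the groups in $\mathcal{P}$, and $\Gamma_p\in\mathcal{P}$ the group fixing $p\in\Pi$. Depth $D_X$ of a vertex is its distance to the Cayley graph, extended linearly over edges. A horoball is the smallest full subgraph containing the closure of a component of $D_X^{-1}(0,\infty)$; it meets the Cayley graph in a single coset $gP$ and is said to be based at $gP$. A geodesic $\gamma:[a,b]\to\mathcal{H}$ in a horoball is regular if there are $a\le A\le B\le b$ with $B-A\le3$ such that $\frac{d}{dt}D_X(\gamma(t))$ is $1$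 for $t<A$, $0$ for $A<t<B$, $-1$ for $t>B$; a geodesic in $X$ is regular if every intersection with a horoball is regular. *)

(* Defs.v *)
From Stdlib Require Import List Arith Lia.
Import ListNotations.
Set Implicit Arguments.

Record group := Group {
  carrier :> Type;
  gmul : carrier -> carrier -> carrier;
  ginv : carrier -> carrier;
  gone : carrier;
  gmulA : forall x y z, gmul x (gmul y z) = gmul (gmul x y) z;
  gmul1l : forall x, gmul gone x = x;
  gmulVl : forall x, gmul (ginv x) x = gone }.

Arguments gmul {g}.
Arguments ginv {g}.
Arguments gone {g}.

Section CuspedSpace.
Variable G : group.

Definition gprod (l : list G) : G := fold_right gmul gone l.

Definition is_subgroup (P : G -> Prop) : Prop :=
  P gone /\ (forall x y, P x -> P y -> P (gmul x y)) /\ (forall x, P x -> P (ginv x)).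

Definition generated_by (Q : G -> Prop) (S : list G) (x : G) : Prop :=
  exists l : list G, (forall s, In s l -> In s S /\ Q s) /\ gprod l = x.

Definition word_len_le (Q : G -> Prop) (S : list G) (x : G) (n : nat) : Prop :=
  exists l : list G, (forall s, In s l -> In s S /\ Q s) /\ length l <= n /\ gprod l = x.

Variable I : Type.            (* index set of the peripheral collection *)
Variable P : I -> G -> Prop.  (* the peripheral subgroups P_i *)
Variable Sg : list G.         (* the finite symmetric generating set *)

(* Vertices of the Groves–Manning cusped space X:
   [cay h]      : the vertex h of Cay(G,S) (depth 0);
   [hor i h k]  : the vertex over h (in the horoball on the coset h P_i)
                  at depth k+1. *)
Inductive vert : Type :=
| cay : G -> vert
| hor : I -> G -> nat -> vert.

Inductive edge0 : vert -> vert -> Prop :=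
| e_cay : forall h s, In s Sg -> edge0 (cay h) (cay (gmul h s))
| e_vert0 : forall i h, edge0 (cay h) (hor i h 0)
| e_vert : forall i h k, edge0 (hor i h k) (hor i h (S k))
| e_horiz : forall i h h' k,
    P i (gmul (ginv h) h') -> h <> h' ->
    word_len_le (P i) Sg (gmul (ginv h) h') (2 ^ (S k)) ->
    edge0 (hor i h k) (hor i h' k).

Definition adj (u v : vert) : Prop := edge0 u v \/ edge0 v u.

Definition depth (v : vert) : nat :=
  match v with cay _ => 0 | hor _ _ k => S k end.

Definition path_of (f : nat -> vert) (n : nat) (u v : vert) : Prop :=
  f 0 = u /\ f n = v /\ forall j, j < n -> adj (f j) (f (S j)).

Definition is_dist (u v : vert) (n : nat) : Prop :=
  (exists f, path_of f n u v) /\ forall f m, path_of f m u v -> n <= m.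

Definition geodesic (f : nat -> vert) (n : nat) (u v : vert) : Prop :=
  path_of f n u v /\ forall f' m, path_of f' m u v -> n <= m.

(* δ-slim geodesic triangles (with vertex corners) *)
Definition hyperbolic (delta : nat) : Prop :=
  forall x y z f1 n1 f2 n2 f3 n3,
    geodesic f1 n1 x y -> geodesic f2 n2 y z -> geodesic f3 n3 z x ->
    forall t, t <= n1 ->
      exists w, ((exists t', t' <= n2 /\ w = f2 t') \/ (exists t', t' <= n3 /\ w = f3 t')) /\
        exists p d, d <= delta /\ path_of p d (f1 t) w.

(* vertex set of the horoball based at the coset g P_i
   (the smallest full subgraph containing the closure of the
   corresponding component of D_X^{-1}(0,oo)) *)
Definition inH (i : I) (g : G) (v : vert) : Prop :=
  match v with
  | cay h => P i (gmul (ginv g) h)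
  | hor j h _ => j = i /\ P i (gmul (ginv g) h)
  end.

Definition component (Hp : vert -> Prop) (f : nat -> vert) (n k l : nat) : Prop :=
  k <= l <= n /\ (forall t, k <= t <= l -> Hp (f t)) /\
  (k = 0 \/ ~ Hp (f (k - 1))) /\ (l = n \/ ~ Hp (f (S l))).

Definition regular_piece (f : nat -> vert) (k l : nat) : Prop :=
  exists A B, k <= A /\ A <= B /\ B <= l /\ B - A <= 3 /\
    forall j, k <= j < l ->
      (j < A -> depth (f (S j)) = S (depth (f j))) /\
      (A <= j < B -> depth (f (S j)) = depth (f j)) /\
      (B <= j -> depth (f j) = S (depth (f (S j)))).

Definition regular (f : nat -> vert) (n : nat) : Prop :=
  forall i g k l, component (inH i g) f n k l -> regular_piece f k l.

End CuspedSpace.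

Arguments cay {G I}.
Arguments is_subgroup {G}.
Arguments generated_by {G}.
Arguments word_len_le {G}.
Arguments gprod {G}.
Arguments hyperbolic {G I}.

(* Main.v *)
Require Import Defs.
From Stdlib Require Import List Arith Lia Classical.
Set Implicit Arguments.

Section Pf.
Variable G : group.
Variable I : Type.
Variable P : I -> G -> Prop.
Variable Sg : list G.
Hypothesis HPsub : forall i, is_subgroup (P i).

Notation V := (vert G I).
Notation adjX := (adj P Sg).
Notation pathX := (path_of P Sg).

Lemma mulV (x : G) : gmul x (ginv x) = gone.
Proof.
  rewrite <- (gmul1l _ (gmul x (ginv x))).
  rewrite <- (gmulVl _ (ginv x)) at 1.
  rewrite <- gmulA. rewrite (gmulA _ (ginv x) x (ginv x)).
  rewrite gmulVl, gmul1l. apply gmulVl.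
Qed.

Lemma mul1r (x : G) : gmul x gone = x.
Proof. rewrite <- (gmulVl _ x), gmulA, mulV, gmul1l. reflexivity. Qed.

Lemma inv_uniq (x y : G) : gmul y x = gone -> y = ginv x.
Proof. intro H. rewrite <- (mul1r y), <- (mulV x), gmulA, H, gmul1l. reflexivity. Qed.

Lemma inv_mul (a b : G) : ginv (gmul a b) = gmul (ginv b) (ginv a).
Proof.
  symmetry; apply inv_uniq.
  rewrite <- gmulA, (gmulA _ (ginv a) a b), gmulVl, gmul1l, gmulVl. reflexivity.
Qed.

Lemma inv_inv (a : G) : ginv (ginv a) = a.
Proof. symmetry; apply inv_uniq. apply mulV. Qed.

Lemma Pmul i x y : P i x -> P i y -> P i (gmul x y).
Proof. destruct (HPsub i) as [_ [H _]]; auto. Qed.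
Lemma Pinv i x : P i x -> P i (ginv x).
Proof. destruct (HPsub i) as [_ [_ H]]; auto. Qed.

Lemma coset_trans i g h h' : P i (gmul (ginv g) h) -> P i (gmul (ginv h) h') ->
  P i (gmul (ginv g) h').
Proof.
  intros H1 H2. pose proof (Pmul H1 H2) as H.
  rewrite <- gmulA, (gmulA _ h (ginv h) h'), mulV, gmul1l in H. exact H.
Qed.

Lemma coset_trans' i g h h' : P i (gmul (ginv g) h) -> P i (gmul (ginv h') h) ->
  P i (gmul (ginv g) h').
Proof.
  intros H1 H2. eapply coset_trans; [exact H1|]. apply Pinv in H2.
  rewrite inv_mul, inv_inv in H2. exact H2.
Qed.

Lemma coset_same i g g' h x : P i (gmul (ginv g) h) -> P i (gmul (ginv g') h) ->
  P i (gmul (ginv g) x) -> P i (gmul (ginv g') x).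
Proof.
  intros H1 H2 H3. assert (H0 : P i (gmul (ginv g') g)) by (eapply coset_trans'; eauto). clear H1. rename H0 into H1.
  pose proof (Pmul H1 H3) as H.
  rewrite <- gmulA, (gmulA _ g (ginv g) x), mulV, gmul1l in H. exact H.
Qed.


Lemma adj_sym u v : adjX u v -> adjX v u.
Proof. unfold adj; tauto. Qed.

Lemma edge_depth u v : edge0 P Sg u v -> depth u <= S (depth v) /\ depth v <= S (depth u).
Proof. intro e; destruct e; simpl; lia. Qed.

Lemma adj_depth u v : adjX u v -> depth u <= S (depth v) /\ depth v <= S (depth u).
Proof. intros [e|e]; apply edge_depth in e; lia. Qed.

Definition pathle (x w : V) (c : nat) := exists p d, d <= c /\ pathX p d x w.

Lemma path_rev f n u v : pathX f n u v -> pathX (fun t => f (n - t)) n v u.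
Proof.
  intros [H0 [H1 H2]]. split; [|split].
  - rewrite Nat.sub_0_r; auto.
  - rewrite Nat.sub_diag; auto.
  - intros j Hj. apply adj_sym. replace (n - j) with (S (n - S j)) by lia.
    apply H2. lia.
Qed.

Lemma path_cat f m g k u v w : pathX f m u v -> pathX g k v w ->
  pathX (fun t => if t <=? m then f t else g (t - m)) (m + k) u w.
Proof.
  intros [F0 [F1 F2]] [G0 [G1 G2]]. split; [|split].
  - simpl. auto.
  - destruct (Nat.leb_spec (m + k) m).
    + assert (k = 0) by lia. subst k. rewrite Nat.add_0_r. congruence.
    + replace (m + k - m) with k by lia. auto.
  - intros j Hj. destruct (Nat.leb_spec j m); destruct (Nat.leb_spec (S j) m).
    + apply F2. lia.
    + assert (j = m) by lia. subst j. rewrite F1, <- G0.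
      replace (S m - m) with 1 by lia. apply G2. lia.
    + lia.
    + replace (S j - m) with (S (j - m)) by lia. apply G2. lia.
Qed.

Lemma path_sub f n u v a b : pathX f n u v -> a <= b -> b <= n ->
  pathX (fun t => f (a + t)) (b - a) (f a) (f b).
Proof.
  intros [F0 [F1 F2]] Hab Hbn. split; [|split].
  - rewrite Nat.add_0_r; auto.
  - f_equal; lia.
  - intros j Hj. replace (a + S j) with (S (a + j)) by lia. apply F2. lia.
Qed.

Lemma path_depth f m u v : pathX f m u v -> depth u <= depth v + m.
Proof.
  intros [F0 [F1 F2]]. subst u v.
  assert (forall j, j <= m -> depth (f (m - j)) <= depth (f m) + j).
  { induction j; intros Hj.
    - rewrite Nat.sub_0_r; lia.
    - specialize (IHj ltac:(lia)). pose proof (F2 (m - S j) ltac:(lia)) as Ha.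
      apply adj_depth in Ha. replace (S (m - S j)) with (m - j) in Ha by lia. lia. }
  specialize (H m (le_n _)). rewrite Nat.sub_diag in H. exact H.
Qed.

Lemma path_depth' f m u v : pathX f m u v -> depth v <= depth u + m.
Proof. intro H. apply path_rev in H. apply path_depth in H. exact H. Qed.

Lemma pathle_depth x w c : pathle x w c -> depth x <= depth w + c /\ depth w <= depth x + c.
Proof.
  intros [p [d [Hd Hp]]]. pose proof (path_depth Hp). pose proof (path_depth' Hp). lia.
Qed.

Lemma pathle_sym x w c : pathle x w c -> pathle w x c.
Proof. intros [p [d [Hd Hp]]]. exists (fun t => p (d - t)), d. split; auto. apply path_rev; auto. Qed.

Lemma pathle_trans x y z a b : pathle x y a -> pathle y z b -> pathle x z (a + b).
Proof.
  intros [p [d [Hd Hp]]] [q [e [He Hq]]].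
  exists (fun t => if t <=? d then p t else q (t - d)), (d + e). split. lia.
  eapply path_cat; eauto.
Qed.

Lemma pathle_refl x : pathle x x 0.
Proof. exists (fun _ => x), 0. split. lia. split; [|split]; auto. intros; lia. Qed.

Lemma pathle_mono x y a b : pathle x y a -> a <= b -> pathle x y b.
Proof. intros [p [d [Hd Hp]]] Hab. exists p, d. split; auto. lia. Qed.

Lemma path_pathle f n u v : pathX f n u v -> pathle u v n.
Proof. intros H. exists f, n. split; auto. Qed.

Lemma geo_path f n x y : geodesic P Sg f n x y -> pathX f n x y.
Proof. intros [H _]; auto. Qed.

Lemma geo_lo f n x y t c : geodesic P Sg f n x y -> t <= n -> pathle x (f t) c -> t <= c.
Proof.
  intros [Hp Hmin] Ht Hc.
  assert (pathle (f t) y (n - t)).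
  { pose proof (path_sub Hp Ht (le_n n)) as Hs. destruct Hp as [_ [F1 _]].
    rewrite F1 in Hs. eapply path_pathle; eauto. }
  destruct (pathle_trans Hc H) as [p [d [Hd Hq]]].
  specialize (Hmin _ _ Hq). lia.
Qed.

Lemma geo_hi f n x y t c : geodesic P Sg f n x y -> t <= n -> pathle (f t) y c -> n - t <= c.
Proof.
  intros [Hp Hmin] Ht Hc.
  assert (pathle x (f t) t).
  { pose proof (path_sub Hp (Nat.le_0_l t) Ht) as Hs. destruct Hp as [F0 _].
    rewrite F0 in Hs. rewrite Nat.sub_0_r in Hs. eapply path_pathle; eauto. }
  destruct (pathle_trans H Hc) as [p [d [Hd Hq]]].
  specialize (Hmin _ _ Hq). lia.
Qed.

Lemma geo_rev f n x y : geodesic P Sg f n x y -> geodesic P Sg (fun t => f (n - t)) n y x.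
Proof.
  intros [Hp Hmin]. split. apply path_rev; auto.
  intros f' m Hf'. apply path_rev in Hf'. eauto.
Qed.

Lemma min_nat (Q : nat -> Prop) m : Q m -> exists n, Q n /\ forall k, Q k -> n <= k.
Proof.
  revert Q. induction m as [m IH] using (well_founded_induction lt_wf). intros Q Hm.
  destruct (classic (exists k, k < m /\ Q k)) as [[k [Hk Qk]]|Hn].
  - eauto.
  - exists m. split; auto. intros k Qk. destruct (Nat.lt_ge_cases k m); auto.
    exfalso; eauto.
Qed.

Lemma geo_exists u v c : pathle u v c -> exists f n, geodesic P Sg f n u v.
Proof.
  intros [p [d [_ Hp]]].
  destruct (@min_nat (fun n => exists f, pathX f n u v) d) as [n [[f Hf] Hmin]]; eauto.
  exists f, n. split; auto. intros f' m Hm. apply Hmin; eauto.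
Qed.


Lemma hor_nbr j g' u v : inH P j g' u -> 0 < depth u -> adjX u v -> inH P j g' v.
Proof.
  intros Hu Hd Ha. destruct u as [h|j0 h k]; simpl in Hd; [lia|].
  simpl in Hu. destruct Hu as [-> Hu].
  destruct Ha as [e|e]; inversion e; subst; simpl; auto.
  all: split; [reflexivity|]; first [eapply coset_trans; eassumption | eapply coset_trans'; eassumption].
Qed.


Lemma lemmaX j g' p m x w : pathX p m x w -> inH P j g' x -> m < depth x ->
  inH P j g' w /\ 0 < depth w.
Proof.
  intros [F0 [F1 F2]] Hx Hm. subst.
  assert (forall t, t <= m -> inH P j g' (p t) /\ depth (p 0) <= depth (p t) + t).
  { induction t; intros Ht. split; auto; lia.
    destruct (IHt ltac:(lia)) as [IH1 IH2]. pose proof (F2 t ltac:(lia)) as Ha.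
    split. eapply hor_nbr; eauto. lia.
    apply adj_depth in Ha. lia. }
  destruct (H m (le_n _)). split; auto. lia.
Qed.

Lemma lemmaX' j g' x w c : pathle x w c -> inH P j g' x -> c < depth x ->
  inH P j g' w /\ 0 < depth w.
Proof. intros [p [d [Hd Hp]]] Hx Hc. eapply lemmaX; eauto. lia. Qed.

Lemma same_horo i g j g' w : inH P i g w -> inH P j g' w -> 0 < depth w ->
  forall v, inH P i g v <-> inH P j g' v.
Proof.
  intros H1 H2 Hd. destruct w as [h|j0 h k]; simpl in Hd; [lia|].
  simpl in H1, H2. destruct H1 as [-> H1]. destruct H2 as [<- H2].
  intros [x|j1 x k1]; simpl; split; intros; try tauto.
  - eapply coset_same with (g := g) (h := h); eassumption.
  - eapply coset_same with (g := g') (h := h); eassumption.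
  - destruct H as [? H]; split; auto. eapply coset_same with (g := g) (h := h); eassumption.
  - destruct H as [? H]; split; auto. eapply coset_same with (g := g') (h := h); eassumption.
Qed.


Definition up (i : I) (c : G) (e : nat) : V :=
  match e with 0 => cay c | S e' => hor G i c e' end.

Lemma depth_up i c e : depth (up i c e) = e.
Proof. destruct e; reflexivity. Qed.

Lemma inH_up i g c e : P i (gmul (ginv g) c) -> inH P i g (up i c e).
Proof. destruct e; simpl; auto. Qed.

Lemma adj_up i c t : adjX (up i c t) (up i c (S t)).
Proof. left. destruct t; simpl; constructor. Qed.

Lemma up_path i c e : pathX (fun t => up i c t) e (cay c) (up i c e).
Proof. split; [|split]; auto. intros; apply adj_up. Qed.

Lemma up_geo i c e : geodesic P Sg (fun t => up i c t) e (cay c) (up i c e).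
Proof.
  split. apply up_path. intros f m Hf. apply path_depth' in Hf.
  rewrite depth_up in Hf. simpl in Hf. lia.
Qed.

Definition base (v : V) : G := match v with cay h => h | hor _ _ h _ => h end.

Lemma adj_base u v : adjX u v -> depth v = S (depth u) -> base v = base u.
Proof. intros [e|e] Hd; inversion e; subst; simpl in *; try reflexivity; lia. Qed.

Lemma path_base f m u v : pathX f m u v -> depth v = depth u + m -> base v = base u.
Proof.
  intros Hp Hd. destruct Hp as [F0 [F1 F2]] eqn:Hp'. clear Hp'.
  assert (Hdep : forall t, t <= m -> depth (f t) = depth u + t).
  { intros t Ht. pose proof (path_depth' (path_sub (conj F0 (conj F1 F2)) (Nat.le_0_l t) Ht)).
    pose proof (path_depth' (path_sub (conj F0 (conj F1 F2)) Ht (le_n m))).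
    rewrite F0 in *. rewrite F1 in *. lia. }
  assert (forall t, t <= m -> base (f t) = base u).
  { induction t; intros Ht. rewrite F0; auto.
    rewrite <- IHt by lia. apply adj_base. apply F2; lia.
    rewrite !Hdep by lia. lia. }
  rewrite <- F1. auto.
Qed.


Definition gam (i : I) (g a : G) (M : nat) (t : nat) : V :=
  if t <=? M then up i g t else up i a M.

Lemma gam_geo i g a K : g <> a -> P i (gmul (ginv g) a) ->
  word_len_le (P i) Sg (gmul (ginv g) a) (2 ^ S K) ->
  geodesic P Sg (gam i g a (S K)) (S (S K)) (cay g) (up i a (S K)).
Proof.
  intros Hne HP Hw. split; [split; [|split]|].
  - reflexivity.
  - unfold gam. destruct (Nat.leb_spec (S (S K)) (S K)); [lia|reflexivity].
  - intros j Hj. unfold gam. destruct (Nat.leb_spec j (S K)); destruct (Nat.leb_spec (S j) (S K)).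
    + apply adj_up.
    + assert (j = S K) by lia. subst j. simpl. left. constructor; auto.
    + lia.
    + lia.
  - intros f m Hf. pose proof (path_depth' Hf) as Hd. rewrite depth_up in Hd. simpl in Hd.
    destruct (Nat.eq_dec m (S K)); [|lia]. subst m.
    apply path_base in Hf; [|rewrite depth_up; reflexivity]. simpl in Hf. congruence.
Qed.

Lemma gam_in i g a M t : P i (gmul (ginv g) a) -> inH P i g (gam i g a M t).
Proof.
  intros H. unfold gam. destruct (t <=? M); apply inH_up; auto.
  rewrite gmulVl. destruct (HPsub i); auto.
Qed.

Lemma gam_depth i g a M t : t <= S M -> t <= S (depth (gam i g a M t)).
Proof. intros. unfold gam. destruct (Nat.leb_spec t M); rewrite depth_up; lia. Qed.


Lemma comp_left (Hp : V -> Prop) (f : nat -> V) u : Hp (f u) ->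
  exists k, k <= u /\ (forall t, k <= t <= u -> Hp (f t)) /\ (k = 0 \/ ~ Hp (f (k - 1))).
Proof.
  induction u; intros H.
  - exists 0. split; auto. split; auto. intros t Ht. replace t with 0 by lia. auto.
  - destruct (classic (Hp (f u))) as [Hu|Hu].
    + destruct (IHu Hu) as [k [Hk [Hall Hb]]]. exists k. split; [lia|]. split; auto.
      intros t Ht. destruct (Nat.eq_dec t (S u)); [subst; auto|]. apply Hall; lia.
    + exists (S u). split; [lia|]. split.
      * intros t Ht. replace t with (S u) by lia. auto.
      * right. simpl. rewrite Nat.sub_0_r. auto.
Qed.

Lemma comp_right (Hp : V -> Prop) (f : nat -> V) n u : u <= n -> Hp (f u) ->
  exists l, u <= l <= n /\ (forall t, u <= t <= l -> Hp (f t)) /\ (l = n \/ ~ Hp (f (S l))).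
Proof.
  intros Hun. remember (n - u) as d eqn:Hd. revert u Hun Hd. induction d; intros u Hun Hd H.
  - exists u. split; [lia|]. split. intros t Ht. replace t with u by lia. auto. left; lia.
  - destruct (classic (Hp (f (S u)))) as [Hu|Hu].
    + destruct (IHd (S u) ltac:(lia) ltac:(lia) Hu) as [l [Hl [Hall Hb]]].
      exists l. split; [lia|]. split; auto.
      intros t Ht. destruct (Nat.eq_dec t u); [subst; auto|]. apply Hall; lia.
    + exists u. split; [lia|]. split. intros t Ht. replace t with u by lia. auto. right; auto.
Qed.

Lemma comp_depth j g' f n u v k l : pathX f n u v -> depth u = 0 -> depth v = 0 ->
  component (inH P j g') f n k l -> depth (f k) = 0 /\ depth (f l) = 0.
Proof.
  intros Hp Hu Hv [[Hkl Hln] [Hall [Hk Hl]]]. destruct Hp as [F0 [F1 F2]].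
  split.
  - destruct Hk as [->|Hk]. rewrite F0; auto.
    destruct (Nat.eq_dec (depth (f k)) 0) as [E|E]; auto. exfalso. apply Hk.
    destruct k as [|k]. rewrite F0 in *. simpl in *. lia.
    apply hor_nbr with (u := f (S k)). apply Hall; lia. lia. apply adj_sym. simpl. rewrite Nat.sub_0_r. apply F2. lia.
  - destruct Hl as [->|Hl]. rewrite F1; auto.
    destruct (Nat.eq_dec (depth (f l)) 0) as [E|E]; auto. exfalso. apply Hl.
    apply hor_nbr with (u := f l). apply Hall; lia. lia. apply F2.
    destruct (Nat.eq_dec l n); [|lia]. subst l. rewrite F1 in E. lia.
Qed.

Lemma profile (f : nat -> V) k l A B : depth (f k) = 0 -> depth (f l) = 0 -> k <= A -> A <= B -> B <= l ->
  (forall j, k <= j < l ->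
      (j < A -> depth (f (S j)) = S (depth (f j))) /\
      (A <= j < B -> depth (f (S j)) = depth (f j)) /\
      (B <= j -> depth (f j) = S (depth (f (S j))))) ->
  depth (f A) = A - k /\ l - B = A - k.
Proof.
  intros Hk Hl HkA HAB HBl H.
  assert (H1 : forall t, t <= A - k -> depth (f (k + t)) = t).
  { induction t; intros Ht. rewrite Nat.add_0_r; auto.
    replace (k + S t) with (S (k + t)) by lia. rewrite (proj1 (H (k + t) ltac:(lia))) by lia.
    rewrite IHt by lia. auto. }
  assert (H2 : forall t, t <= B - A -> depth (f (A + t)) = depth (f A)).
  { induction t; intros Ht. rewrite Nat.add_0_r; auto.
    replace (A + S t) with (S (A + t)) by lia. rewrite (proj1 (proj2 (H (A + t) ltac:(lia)))) by lia.
    apply IHt; lia. }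
  assert (H3 : forall t, t <= l - B -> depth (f (B + t)) + t = depth (f B)).
  { induction t; intros Ht. rewrite !Nat.add_0_r; reflexivity.
    replace (B + S t) with (S (B + t)) by lia.
    pose proof (proj2 (proj2 (H (B + t) ltac:(lia))) ltac:(lia)). rewrite <- IHt by lia. lia. }
  specialize (H1 (A - k) (le_n _)). replace (k + (A - k)) with A in H1 by lia.
  specialize (H2 (B - A) (le_n _)). replace (A + (B - A)) with B in H2 by lia.
  specialize (H3 (l - B) (le_n _)). replace (B + (l - B)) with l in H3 by lia.
  lia.
Qed.

Lemma max_nat (Q : nat -> Prop) n : Q 0 -> exists t, t <= n /\ Q t /\ forall t', t < t' <= n -> ~ Q t'.
Proof.
  intros H0. induction n.
  - exists 0. repeat split; auto. lia.
  - destruct (classic (Q (S n))) as [Hq|Hq].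
    + exists (S n). repeat split; auto. lia.
    + destruct IHn as [t [Ht [Qt Hm]]]. exists t. repeat split; auto.
      intros t' Ht'. destruct (Nat.eq_dec t' (S n)); [subst; auto|]. apply Hm; lia.
Qed.

Lemma lt_pow2 n : n <= 2 ^ S n.
Proof. assert (forall m, m < 2 ^ m). { induction m; [simpl; lia|]. rewrite (Nat.pow_succ_r' 2 m). lia. } specialize (H (S n)). lia. Qed.

End Pf.

Unset Implicit Arguments.

Theorem mainTheorem4 (Γ : group) (I : Type) (P : I -> Γ -> Prop) (S : list Γ)
  (δ : nat)
  (HIfin : exists l : list I, forall i, In i l)
  (HPsub : forall i, is_subgroup (P i))
  (HPinf : forall i, ~ exists l : list Γ, forall x, P i x -> In x l)
  (HSsym : forall s, In s S -> In (ginv s) S)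
  (HSgen : forall x, generated_by (fun _ => True) S x)
  (HPgen : forall i x, P i x -> generated_by (P i) S x)
  (Hδ : 1 <= δ) (Hhyp : hyperbolic P S δ)
  (g : Γ) (i : I) (α : Γ) (Hα : P i (gmul (ginv g) α))
  (ng : nat) (Hng : is_dist P S (cay gone) (cay g) ng)
  (τ : nat -> vert Γ I) (n : nat)
  (Hτ : geodesic P S τ n (cay gone) (cay α)) (Hreg : regular P τ n) :
  (exists k l, k <= l <= n /\ (forall t, k <= t <= l -> inH P i g (τ t)) /\
     n <= (l - k) + (ng + 12 * δ)) /\
  (forall (j : I) (g' : Γ), ~ (forall v, inH P i g v <-> inH P j g' v) ->
     forall k l, component (inH P j g') τ n k l -> l - k <= ng + 12 * δ).
Proof.
  destruct Hng as [[σ Hσ] Hσmin].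
  assert (Gσ : geodesic P S σ ng (cay gone) (cay g)) by (split; auto).
  pose proof Hσ as [σ0 [σ1 σ2]].
  pose proof (geo_path Hτ) as [τ0 [τ1 τ2]].
  destruct (classic (g = α)) as [Heq|Hne].
  { subst α.
    assert (Hn : n <= ng) by (destruct Hτ as [_ Hm]; exact (Hm σ ng Hσ)).
    split.
    - exists n, n. split; [lia|]. split; [|lia]. intros t Ht. replace t with n by lia.
      rewrite τ1. exact Hα.
    - intros j g' _ k l [[Hkl Hln] _]. lia. }
  destruct (HPgen i _ Hα) as [wl [Hwl Hgp]].
  set (K := length wl).
  assert (Hw : word_len_le (P i) S (gmul (ginv g) α) (2 ^ Datatypes.S K)).
  { exists wl. split; [intros s Hs; apply Hwl; auto|]. split; auto. apply lt_pow2. }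
  set (M := Datatypes.S K).
  pose proof (gam_geo P i K Hne Hα Hw) as Gγ. fold M in Gγ.
  pose proof (up_geo Γ P S i α M) as Gv.
  assert (Hol : pathle P S (cay gone) (up Γ i α M) (ng + Datatypes.S M)).
  { eapply pathle_trans; eapply path_pathle; [exact Hσ | exact (geo_path Gγ)]. }
  destruct (geo_exists Hol) as [lam [nl Gλ]].
  assert (T1 : forall t, t <= nl -> exists w,
     ((exists s, s <= Datatypes.S M /\ w = gam Γ i g α M s) \/ (exists s, s <= ng /\ w = σ s))
     /\ pathle P S (lam t) w δ).
  { intros t Ht. destruct (Hhyp _ _ _ _ _ _ _ _ _ Gλ (geo_rev Gγ) (geo_rev Gσ) t Ht)
      as [w [Hw1 Hw2]].
    exists w. split; [|exact Hw2].
    destruct Hw1 as [[t' [Ht' ->]]|[t' [Ht' ->]]];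
      [left; exists (Datatypes.S M - t') | right; exists (ng - t')]; split; (lia || reflexivity). }
  set (near1 := fun x => exists w, pathle P S x w (δ+δ) /\
     ((exists s, s <= ng /\ w = σ s) \/ (exists s, s <= Datatypes.S M /\ w = gam Γ i g α M s))).
  set (near2 := fun x => exists e, e <= M /\ pathle P S x (up Γ i α e) (δ+δ)).
  assert (Hdich : forall t, t <= n -> near1 (τ t) \/ near2 (τ t)).
  { intros t Ht. destruct (Hhyp _ _ _ _ _ _ _ _ _ Hτ Gv (geo_rev Gλ) t Ht) as [w [Hw1 Hw2]].
    assert (Hw2' : pathle P S (τ t) w δ) by exact Hw2.
    destruct Hw1 as [[t' [Ht' ->]]|[t' [Ht' ->]]].
    - right. exists t'. split; auto. eapply pathle_mono; [exact Hw2'|lia].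
    - left. destruct (T1 (nl - t') ltac:(lia)) as [w' [Hw' Hp']].
      exists w'. split. eapply pathle_trans; [exact Hw2'|exact Hp'].
      destruct Hw' as [[s [Hs ->]]|[s [Hs ->]]]; [right|left]; exists s; auto. }
  assert (Fσ1 : forall s, s <= ng -> pathle P S (cay gone) (σ s) s).
  { intros s Hs. pose proof (path_sub Hσ (Nat.le_0_l s) Hs) as H. rewrite σ0 in H.
    rewrite Nat.sub_0_r in H. eapply path_pathle; eauto. }
  assert (Fσ2 : forall s, s <= ng -> depth (σ s) + s <= ng).
  { intros s Hs. pose proof (path_depth (path_sub Hσ Hs (le_n ng))) as H. rewrite σ1 in H.
    simpl in H. lia. }
  assert (Fγ1 : forall s, s <= Datatypes.S M -> pathle P S (cay gone) (gam Γ i g α M s) (ng + s)).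
  { intros s Hs. eapply pathle_trans. eapply path_pathle; exact Hσ.
    pose proof (path_sub (geo_path Gγ) (Nat.le_0_l s) Hs) as H.
    destruct (geo_path Gγ) as [g0 _]. rewrite g0 in H. rewrite Nat.sub_0_r in H.
    eapply path_pathle; exact H. }
  assert (Fγ2 : forall s, inH P i g (gam Γ i g α M s)) by (intros; apply gam_in; auto).
  assert (Fγ3 : forall s, s <= Datatypes.S M -> s <= Datatypes.S (depth (gam Γ i g α M s)))
    by (intros; apply gam_depth; auto).
  assert (Fv1 : forall e, inH P i g (up Γ i α e)) by (intros; apply inH_up; auto).
  assert (Fv3 : forall e, pathle P S (up Γ i α e) (cay α) e)
    by (intros; apply pathle_sym; eapply path_pathle; apply up_path).
  split.
  2:{
    intros j g' Hneq k l Hc.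
    destruct (Hreg _ _ _ _ Hc) as [A [B [HkA [HAB [HBl [HBA Hprof]]]]]].
    pose proof Hc as [[Hkl Hln] [Hall _]].
    destruct (comp_depth HPsub (geo_path Hτ) eq_refl eq_refl Hc) as [Hk0 Hl0].
    destruct (profile τ Hk0 Hl0 HkA HAB HBl Hprof) as [HA Hlb].
    destruct (le_lt_dec (depth (τ A)) (δ+δ)) as [Hsmall|Hbig]; [lia|].
    destruct (Hdich A ltac:(lia)) as [[w [Hpw [[s [Hs ->]]|[s [Hs ->]]]]]|[e [He Hpe]]].
    - assert (HAn : A <= n) by lia. pose proof (geo_lo Hτ HAn (pathle_trans (Fσ1 s Hs) (pathle_sym Hpw))).
      pose proof (pathle_depth Hpw). pose proof (Fσ2 s Hs). lia.
    - exfalso. apply Hneq. destruct (lemmaX' HPsub _ _ Hpw (Hall A ltac:(lia)) Hbig) as [Hin Hd].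
      exact (same_horo P HPsub _ _ _ _ _ (Fγ2 s) Hin Hd).
    - exfalso. apply Hneq. destruct (lemmaX' HPsub _ _ Hpe (Hall A ltac:(lia)) Hbig) as [Hin Hd].
      exact (same_horo P HPsub _ _ _ _ _ (Fv1 e) Hin Hd). }

  destruct (max_nat (fun t => near1 (τ t)) n) as [ts [Htsn [Hts Hmax]]].
  { cbv beta. exists (σ 0). split.
    - rewrite τ0, σ0. eapply pathle_mono; [apply pathle_refl|lia].
    - left. exists 0. split; [lia|reflexivity]. }
  assert (Hdata : exists w s, pathle P S (τ ts) w (δ+δ) /\ ts <= ng + s + (δ+δ) /\
            s <= Datatypes.S (depth w) /\ (s = 0 \/ inH P i g w)).
  { destruct Hts as [w [Hpw [[s [Hs ->]]|[s [Hs ->]]]]].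
    - exists (σ s), 0. split; auto. split.
      pose proof (geo_lo Hτ Htsn (pathle_trans (Fσ1 s Hs) (pathle_sym Hpw))). lia.
      split; auto. lia.
    - exists (gam Γ i g α M s), s. split; auto. split.
      pose proof (geo_lo Hτ Htsn (pathle_trans (Fγ1 s Hs) (pathle_sym Hpw))). lia.
      split. apply Fγ3; auto. right; apply Fγ2. }
  destruct Hdata as [w [s [Hpw [Hts1 [Hs1 Hs2]]]]].
  pose proof (pathle_depth Hpw) as Hdw.
  assert (Hnear2 : forall t, ts < t <= n -> near2 (τ t)).
  { intros t Ht. destruct (Hdich t ltac:(lia)) as [H|H]; auto. exfalso; apply (Hmax t Ht H). }
  assert (Hend : forall t e, t <= n -> pathle P S (τ t) (up Γ i α e) (δ+δ) -> n - t <= δ + δ + e).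
  { intros t e Ht Hp. apply (geo_hi Hτ Ht). eapply pathle_trans; [exact Hp| apply Fv3]. }
  assert (Hshallow : forall t e, pathle P S (τ t) (up Γ i α e) (δ+δ) ->
            ~ (inH P i g (τ t) /\ 0 < depth (τ t)) -> e <= δ + δ).
  { intros t e Hp Hnd. destruct (le_lt_dec e (δ+δ)) as [|Hlt]; auto. exfalso. apply Hnd.
    apply (lemmaX' HPsub _ _ (pathle_sym Hp)). apply Fv1. rewrite depth_up. auto. }
  destruct (Nat.eq_dec ts n) as [Htn|Htn].
  { exists n, n. split; [lia|]. split.
    - intros t Ht; replace t with n by lia; rewrite τ1; exact Hα.
    - subst ts. rewrite τ1 in Hdw. simpl in Hdw. lia. }
  destruct (Hnear2 (Datatypes.S ts) ltac:(lia)) as [e [He Hpe]].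
  assert (HSn : Datatypes.S ts <= n) by lia.
  pose proof (Hend _ _ HSn Hpe) as Hne'.
  destruct (classic (inH P i g (τ (Datatypes.S ts)) /\ 0 < depth (τ (Datatypes.S ts)))) as [Hdeep|Hnd].
  - destruct Hdeep as [Hin Hdp].
    destruct (comp_left (inH P i g) τ (Datatypes.S ts) Hin) as [k [Hku [HallL Hkb]]].
    destruct (comp_right (inH P i g) τ HSn Hin) as [l [Hul [HallR Hlb]]].
    assert (Hc : component (inH P i g) τ n k l).
    { split; [lia|]. split.
      - intros t Ht. destruct (le_lt_dec t (Datatypes.S ts)); [apply HallL|apply HallR]; lia.
      - split; auto. }
    destruct (comp_depth HPsub (geo_path Hτ) eq_refl eq_refl Hc) as [Hk0 _].
    assert (Htsin : inH P i g (τ ts)).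
    { apply (@hor_nbr _ _ P S HPsub _ _ _ _ Hin Hdp). apply adj_sym. apply τ2. lia. }
    assert (Hkts : k <= ts).
    { destruct (le_lt_dec k ts) as [|Hlt]; auto. exfalso. destruct Hkb as [Hk|Hk]; [lia|].
      replace (k-1) with ts in Hk by lia. auto. }
    assert (Hdts : depth (τ ts) <= ts - k).
    { pose proof (path_depth' (path_sub (geo_path Hτ) Hkts Htsn)). lia. }
    assert (Hnl : n - l <= δ + δ + δ + δ + 1).
    { destruct (Nat.eq_dec l n) as [|Hln]; [lia|].
      destruct Hlb as [|Hl]; [lia|].
      assert (HSl : Datatypes.S l <= n) by lia.
      destruct (Hnear2 (Datatypes.S l) ltac:(lia)) as [e2 [He2 Hpe2]].
      pose proof (Hend _ _ HSl Hpe2).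
      assert (e2 <= δ + δ). { apply (Hshallow _ _ Hpe2). tauto. }
      lia. }
    exists k, l. split; [lia|]. split.
    + destruct Hc as [_ [Hall _]]. exact Hall.
    + lia.
  - pose proof (Hshallow _ _ Hpe Hnd) as Hes.
    assert (Hdw2 : s <= δ + δ + 2).
    { destruct Hs2 as [->|Hwin]; [lia|].
      destruct (le_lt_dec (depth w) (δ+δ+1)) as [|Hlt]; [lia|]. exfalso.
      destruct (lemmaX' HPsub _ _ (pathle_sym Hpw) Hwin ltac:(lia)) as [Htin Htd].
      assert (Hu : inH P i g (τ (Datatypes.S ts))).
      { apply (@hor_nbr _ _ P S HPsub _ _ _ _ Htin Htd). apply τ2. lia. }
      assert (depth (τ (Datatypes.S ts)) = 0).
      { destruct (Nat.eq_dec (depth (τ (Datatypes.S ts))) 0) as [|Hz]; auto.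
        exfalso; apply Hnd; split; auto; lia. }
      pose proof (adj_depth (τ2 ts ltac:(lia))). lia. }
    exists n, n. split; [lia|]. split.
    + intros t Ht; replace t with n by lia; rewrite τ1; exact Hα.
    + lia.
Qed.
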